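(* Let $\mathfrak g$ be a finite-dimensional two-step solvable Lie algebra over a field $k$ of characteristic zero which is generated as a Lie algebra by two elements. Then $\mathfrak g$ admits a complete LR-structure.
   Context: Two-step solvable means $[[\mathfrak g,\mathfrak g],[\mathfrak g,\mathfrak g]]=0$. An LR-structure on a Lie algebra $\mathfrak g$ is a bilinear product $\cdot$ on its underlying space with $x\cdot(y\cdot z)=y\cdot(x\cdot z)$, $(x\cdot y)\cdot z=(x\cdot z)\cdot y$ and $x\cdot y-y\cdot x=[x,y]$ for all $x,y,z$; it is complete if all right multiplications $R(x)\colon y\mapsto y\cdot x$ are nilpotent. *)

(* Defs.v *)
From HB Require Import structures.
From mathcomp Require Import all_boot all_order all_algebra.
Set Implicit Arguments. Unset Strict Implicit. Unset Printing Implicit Defensive.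
Import GRing.Theory.
Local Open Scope ring_scope.

Definition bilinear_op (k : fieldType) (V : vectType k) (f : V -> V -> V) :=
  (forall (a : k) (x y z : V), f (a *: x + y) z = a *: f x z + f y z) /\
  (forall (a : k) (x y z : V), f z (a *: x + y) = a *: f z x + f z y).

Definition is_lie_bracket (k : fieldType) (V : vectType k) (br : V -> V -> V) :=
  [/\ bilinear_op br,
      (forall x : V, br x x = 0) &
      (forall x y z : V, br x (br y z) + br y (br z x) + br z (br x y) = 0)].

Definition in_derived (k : fieldType) (V : vectType k) (br : V -> V -> V) (u : V) :=
  exists s : seq (V * V), u = \sum_(p <- s) br p.1 p.2.

Definition two_step_solvable (k : fieldType) (V : vectType k) (br : V -> V -> V) :=
  forall u v : V, in_derived br u -> in_derived br v -> br u v = 0.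

Definition lie_generated_by (k : fieldType) (V : vectType k) (br : V -> V -> V) (a b : V) :=
  forall U : {vspace V}, a \in U -> b \in U ->
    (forall x y : V, x \in U -> y \in U -> br x y \in U) -> U = fullv.

Definition is_LR_structure (k : fieldType) (V : vectType k) (br mul : V -> V -> V) :=
  [/\ bilinear_op mul,
      (forall x y z : V, mul x (mul y z) = mul y (mul x z)),
      (forall x y z : V, mul (mul x y) z = mul (mul x z) y) &
      (forall x y : V, mul x y - mul y x = br x y)].

Definition LR_complete (k : fieldType) (V : vectType k) (mul : V -> V -> V) :=
  forall x : V, exists n : nat, forall y : V, iter n (fun z => mul z x) y = 0.

(* Main.v *)
Require Import Defs.
From HB Require Import structures.
From mathcomp Require Import all_boot all_order all_algebra.
From Stdlib Require Import Classical ClassicalEpsilon Ring.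
Import GRing.Theory.
Local Open Scope ring_scope.

Section MaxSub.
Variables (k : fieldType) (V : vectType k).

Lemma max_subspace (P : V -> Prop) :
  P 0 -> (forall x y, P x -> P y -> P (x + y)) -> (forall t x, P x -> P (t *: x)) ->
  exists U : {vspace V}, forall v, v \in U <-> P v.
Proof.
move=> P0 PD PZ.
have PL : forall v, P v -> forall w, w \in <[v]>%VS -> P w.
  by move=> v Pv w /vlineP [t ->]; apply: PZ.
suff H : forall m (U : {vspace V}), (forall u, u \in U -> P u) ->
   (\dim {:V} - \dim U < m)%N ->
   exists U' : {vspace V}, (forall u, u \in U' -> P u) /\ (forall v, P v -> v \in U').
  have H0 : forall u, u \in (0 : {vspace V})%VS -> P u by move=> u; rewrite memv0 => /eqP ->.
  have [U' [H1 H2]] := H (\dim {:V}).+1 0%VS H0 (leq_ltn_trans (leq_subr _ _) (ltnSn _)).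
  by exists U' => v; split; [apply: H1 | apply: H2].
elim=> [|m IH] U HU Hlt; first by rewrite ltn0 in Hlt.
case: (classic (exists v, P v /\ v \notin U)) => [[v [Pv nUv]]|Hn]; last first.
  exists U; split=> // v Pv; apply: NNPP => nv; apply: Hn; exists v; split=> //.
  by apply/negP.
apply: (IH (U + <[v]>)%VS).
  move=> u /memv_addP [u1 Hu1 [u2 Hu2 ->]]; apply: PD; first exact: HU.
  exact: PL Hu2.
have Hs : (U <= U + <[v]>)%VS by exact: addvSl.
have Hne : (U != U + <[v]>)%VS.
  apply/negP=> /eqP E; move/negP: nUv; apply; rewrite E.
  by rewrite (subvP (addvSr U _)) // memv_line.
have Hlt2 : (\dim U < \dim (U + <[v]>)%VS)%N by rewrite (ltn_leqif (dimv_leqif_eq Hs)).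
rewrite -ltnS; apply: leq_ltn_trans _ Hlt.
rewrite ltn_sub2lE ?Hlt2 //.
by rewrite dimvS // subvf.
Qed.
End MaxSub.

Section Main.
Variables (k : fieldType) (V : vectType k) (br : V -> V -> V).
Hypothesis Hlie : is_lie_bracket br.
Hypothesis H2 : two_step_solvable br.

Let Hbil : bilinear_op br. Proof. by case: Hlie. Qed.
Let Halt : forall x, br x x = 0. Proof. by case: Hlie. Qed.
Let Hjac : forall x y z : V, br x (br y z) + br y (br z x) + br z (br x y) = 0.
Proof. by case: Hlie. Qed.

Lemma br0l z : br 0 z = 0.
Proof.
have h := (Hbil.1 1 0 0 z); rewrite !scale1r addr0 in h.
by apply: (addrI (br 0 z)); rewrite addr0 -h.
Qed.
Lemma br0r z : br z 0 = 0.
Proof.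
have h := (Hbil.2 1 0 0 z); rewrite !scale1r addr0 in h.
by apply: (addrI (br z 0)); rewrite addr0 -h.
Qed.
Lemma brDl x y z : br (x + y) z = br x z + br y z.
Proof. by have := Hbil.1 1 x y z; rewrite !scale1r. Qed.
Lemma brDr x y z : br z (x + y) = br z x + br z y.
Proof. by have := Hbil.2 1 x y z; rewrite !scale1r. Qed.
Lemma brZl t x z : br (t *: x) z = t *: br x z.
Proof. by have := Hbil.1 t x 0 z; rewrite !addr0 br0l addr0. Qed.
Lemma brZr t x z : br z (t *: x) = t *: br z x.
Proof. by have := Hbil.2 t x 0 z; rewrite !addr0 br0r addr0. Qed.
Lemma brNl x z : br (- x) z = - br x z.
Proof. by rewrite -scaleN1r brZl scaleN1r. Qed.
Lemma brNr x z : br z (- x) = - br z x.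
Proof. by rewrite -scaleN1r brZr scaleN1r. Qed.
Lemma brBl x y z : br (x - y) z = br x z - br y z.
Proof. by rewrite brDl brNl. Qed.
Lemma brBr x y z : br z (x - y) = br z x - br z y.
Proof. by rewrite brDr brNr. Qed.
Lemma br_anti x y : br x y = - br y x.
Proof.
have := Halt (x + y); rewrite brDl !brDr !Halt add0r addr0.
by move/eqP; rewrite addr_eq0 => /eqP.
Qed.

Lemma der_br x y : in_derived br (br x y).
Proof. by exists [:: (x, y)]; rewrite big_seq1. Qed.
Lemma der0 : in_derived br 0.
Proof. by exists [::]; rewrite big_nil. Qed.
Lemma derD u v : in_derived br u -> in_derived br v -> in_derived br (u + v).
Proof. by move=> [s ->] [t ->]; exists (s ++ t); rewrite big_cat. Qed.
Lemma derZ t u : in_derived br u -> in_derived br (t *: u).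
Proof.
move=> [s ->]; exists (map (fun p => (t *: p.1, p.2)) s); rewrite big_map scaler_sumr.
by apply: eq_bigr => p _; rewrite brZl.
Qed.

Variables (a b : V).
Hypothesis Hgen : lie_generated_by br a b.

Definition X v := br a v.
Definition Y v := br b v.
Definition c := br a b.

Lemma XY_comm u : in_derived br u -> X (Y u) = Y (X u).
Proof.
move=> du; have := Hjac a b u.
have -> : br u (br a b) = 0 by apply: H2 => //; apply: der_br.
rewrite addr0 (br_anti u a) brNr /X /Y.
by move/eqP; rewrite subr_eq0 => /eqP.
Qed.

Inductive R0 : (V -> V) -> Prop :=
| R0id : R0 id
| R0X : R0 X
| R0Y : R0 Y
| R0add f g : R0 f -> R0 g -> R0 (fun v => f v + g v)
| R0scale t f : R0 f -> R0 (fun v => t *: f v)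
| R0comp f g : R0 f -> R0 g -> R0 (fun v => f (g v)).

Lemma R0_lin {f} : R0 f -> forall t u v, f (t *: u + v) = t *: f u + f v.
Proof.
elim=> {f} [||| f g _ Hf _ Hg | s f _ Hf | f g _ Hf _ Hg] t u v //=.
- by rewrite /X brDr brZr.
- by rewrite /Y brDr brZr.
- by rewrite Hf Hg scalerDr addrACA.
- by rewrite Hf scalerDr !scalerA mulrC.
- by rewrite Hg Hf.
Qed.

Lemma R0_add {f} : R0 f -> forall u v, f (u + v) = f u + f v.
Proof. by move=> Hf u v; rewrite -{1}(scale1r u) (R0_lin Hf) scale1r. Qed.
Lemma R0_scale {f} : R0 f -> forall t u, f (t *: u) = t *: f u.
Proof.
move=> Hf t u; have := R0_lin Hf t u 0; rewrite !addr0 => ->.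
have := R0_lin Hf 1 0 0; rewrite !scale1r !addr0 => h.
have -> : f 0 = 0 by apply: (addrI (f 0)); rewrite addr0 -h.
by rewrite addr0.
Qed.
Lemma R0_0 {f} : R0 f -> f 0 = 0.
Proof. by move=> Hf; rewrite -{1}(scale0r (0:V)) (R0_scale Hf) scale0r. Qed.

Lemma R0_der {f} : R0 f -> forall u, in_derived br u -> in_derived br (f u).
Proof.
elim=> {f} [||| f g _ Hf _ Hg | s f _ Hf | f g _ Hf _ Hg] u du //=.
- exact: der_br.
- exact: der_br.
- by apply: derD; [apply: Hf | apply: Hg].
- by apply: derZ; apply: Hf.
- by apply: Hf; apply: Hg.
Qed.

Lemma R0_Xcomm {f} : R0 f -> forall u, in_derived br u -> f (X u) = X (f u).
Proof.
elim=> {f} [||| f g _ Hf _ Hg | s f _ Hf | f g Rf Hf Rg Hg] u du //=.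
- by rewrite XY_comm.
- by rewrite Hf // Hg // /X brDr.
- by rewrite Hf // /X brZr.
- by rewrite Hg // Hf //; apply: (R0_der Rg).
Qed.
Lemma R0_Ycomm {f} : R0 f -> forall u, in_derived br u -> f (Y u) = Y (f u).
Proof.
elim=> {f} [||| f g _ Hf _ Hg | s f _ Hf | f g Rf Hf Rg Hg] u du //=.
- by rewrite XY_comm.
- by rewrite Hf // Hg // /Y brDr.
- by rewrite Hf // /Y brZr.
- by rewrite Hg // Hf //; apply: (R0_der Rg).
Qed.
Lemma R0_comm {f g} : R0 f -> R0 g -> forall u, in_derived br u -> f (g u) = g (f u).
Proof.
move=> Rf; elim=> {g} [||| g h _ Hg _ Hh | s g _ Hg | g h Rg Hg Rh Hh] u du //=.
- exact: R0_Xcomm.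
- exact: R0_Ycomm.
- by rewrite (R0_add Rf) Hg // Hh.
- by rewrite (R0_scale Rf) Hg.
- by rewrite Hg ?Hh //; apply: (R0_der Rh).
Qed.

Definition Qp v := exists f, R0 f /\ v = f c.

Lemma Qp_ex : exists U : {vspace V}, forall v, v \in U <-> Qp v.
Proof.
apply: max_subspace.
- by exists (fun v => 0 *: v); split; [apply: R0scale; apply: R0id | rewrite scale0r].
- move=> x y [f [Rf ->]] [g [Rg ->]]; exists (fun v => f v + g v); split=> //.
  exact: R0add.
- move=> t x [f [Rf ->]]; exists (fun v => t *: f v); split=> //; exact: R0scale.
Qed.

Definition Q : {vspace V} := epsilon (inhabits 0%VS) (fun U => forall v, v \in U <-> Qp v).
Lemma memQ v : v \in Q <-> Qp v.
Proof. exact: (epsilon_spec (inhabits 0%VS) _ Qp_ex). Qed.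

Lemma Q_der v : v \in Q -> in_derived br v.
Proof. by move/memQ=> [f [Rf ->]]; apply: (R0_der Rf); apply: der_br. Qed.
Lemma cQ : c \in Q.
Proof. by apply/memQ; exists id; split=> //; apply: R0id. Qed.
Lemma R0Q f v : R0 f -> v \in Q -> f v \in Q.
Proof.
move=> Rf /memQ [g [Rg ->]]; apply/memQ; exists (fun v => f (g v)); split=> //.
exact: R0comp.
Qed.
Lemma XQ {v} : v \in Q -> X v \in Q. Proof. by apply: R0Q; apply: R0X. Qed.
Lemma YQ {v} : v \in Q -> Y v \in Q. Proof. by apply: R0Q; apply: R0Y. Qed.
Lemma brQQ {u v} : u \in Q -> v \in Q -> br u v = 0.
Proof. by move=> hu hv; apply: H2; apply: Q_der. Qed.

Definition Wab := (<[a]> + <[b]>)%VS.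

Lemma decompU x : x \in (Wab + Q)%VS ->
  exists t1 t2 q, x = t1 *: a + t2 *: b + q /\ q \in Q.
Proof.
move/memv_addP=> [w /memv_addP [w1 /vlineP [t1 ->] [w2 /vlineP [t2 ->] ->]] [q Hq ->]].
by exists t1, t2, q.
Qed.

Lemma br_decomp t1 t2 q s1 s2 r : q \in Q -> r \in Q ->
  br (t1 *: a + t2 *: b + q) (s1 *: a + s2 *: b + r) \in Q.
Proof.
move=> hq hr.
rewrite !brDl !brDr !brZl !brZr !Halt (brQQ hq hr) (br_anti b a) (br_anti q a) (br_anti q b).
rewrite -/c -/(X r) -/(Y r) -/(X q) -/(Y q).
have cQ' := cQ; have := XQ hq; have := XQ hr; have := YQ hq; have := YQ hr.
move=> h1 h2 h3 h4.
rewrite !scaler0 !addr0 !scalerN.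
by repeat (apply: memvD || apply: memvZ || rewrite memvN || apply: mem0v || assumption).
Qed.

Lemma full_U : (Wab + Q)%VS = fullv.
Proof.
apply: Hgen.
- by apply: (subvP (addvSl Wab Q)); apply: (subvP (addvSl _ _)); apply: memv_line.
- by apply: (subvP (addvSl Wab Q)); apply: (subvP (addvSr _ _)); apply: memv_line.
move=> x y /decompU [t1 [t2 [q [-> hq]]]] /decompU [s1 [s2 [r [-> hr]]]].
apply: (subvP (addvSr Wab Q)); exact: br_decomp.
Qed.

Lemma decompV x : exists t1 t2 q, x = t1 *: a + t2 *: b + q /\ q \in Q.
Proof. by apply: decompU; rewrite full_U memvf. Qed.

Lemma br_Q x y : br x y \in Q.
Proof.
have [t1 [t2 [q [-> hq]]]] := decompV x; have [s1 [s2 [r [-> hr]]]] := decompV y.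
exact: br_decomp.
Qed.

Lemma der_Q u : in_derived br u -> u \in Q.
Proof. by move=> [s ->]; apply: rpred_sum => p _; apply: br_Q. Qed.

Definition pq : 'End(V) := addv_pi2 Wab Q.
Definition wv : 'End(V) := addv_pi1 Wab Q.
Definition la v := coord [tuple a] 0 (addv_pi1 <[a]> <[b]> (wv v)).
Definition mu v := coord [tuple b] 0 (addv_pi2 <[a]> <[b]> (wv v)).

Lemma line_coord (z y : V) : y \in <[z]>%VS -> y = coord [tuple z] 0 y *: z.
Proof. by rewrite -span_seq1 => /coord_span {1}->; rewrite big_ord1. Qed.

Lemma decomp_eq v : v = la v *: a + mu v *: b + pq v.
Proof.
rewrite -{1}(addv_pi1_pi2 (w := v) (U := Wab) (V := Q)); last by rewrite full_U memvf.
congr (_ + _).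
have hw : wv v \in Wab by apply: memv_pi1.
rewrite -{1}(addv_pi1_pi2 hw) /la /mu.
by congr (_ + _); apply: line_coord; [apply: memv_pi1 | apply: memv_pi2].
Qed.
Lemma pqQ v : pq v \in Q. Proof. exact: memv_pi2. Qed.
Lemma Q_pq {v} : v \in Q -> pq v = v. Proof. exact: addv_pi2_id. Qed.
Lemma Q_wv v : v \in Q -> wv v = 0.
Proof.
move=> hv; have := addv_pi1_pi2 (w := v) (U := Wab) (V := Q).
rewrite full_U memvf => /(_ isT); rewrite -/wv -/pq Q_pq // => h.
by apply: (addIr v); rewrite add0r.
Qed.
Lemma Q_la {v} : v \in Q -> la v = 0.
Proof. by move=> hv; rewrite /la Q_wv // !linear0. Qed.
Lemma Q_mu {v} : v \in Q -> mu v = 0.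
Proof. by move=> hv; rewrite /mu Q_wv // !linear0. Qed.
Lemma la_lin t x y : la (t *: x + y) = t * la x + la y.
Proof. by rewrite /la !linearP. Qed.
Lemma mu_lin t x y : mu (t *: x + y) = t * mu x + mu y.
Proof. by rewrite /mu !linearP. Qed.
Lemma pq_lin t x y : pq (t *: x + y) = t *: pq x + pq y.
Proof. by rewrite linearP. Qed.

Lemma X_linear : linear X.
Proof. by move=> t u v; rewrite /X brDr brZr. Qed.
Definition Xl : {linear V -> V} := HB.pack X (GRing.isLinear.Build k V V *:%R X X_linear).
Definition Xh : 'End(V) := linfun Xl.
Lemma XhE v : Xh v = X v. Proof. by rewrite /Xh lfunE. Qed.

Definition Xp n : 'End(V) := iter n (fun f => (Xh \o f)%VF) \1%VF.
Lemma XpE n v : Xp n v = iter n X v.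
Proof. by elim: n => [|n IH] /=; rewrite ?id_lfunE // comp_lfunE XhE -IH. Qed.

Definition D n := (Xp n @: Q)%VS.
Lemma DS n : D n.+1 = (Xh @: D n)%VS.
Proof. by rewrite /D /= limg_comp. Qed.
Lemma D_add m n : D (m + n) = (Xp m @: D n)%VS.
Proof.
elim: m => [|m IH]; first by rewrite add0n /= lim1g.
by rewrite addSn DS IH /= limg_comp.
Qed.
Lemma XQsub : (Xh @: Q <= Q)%VS.
Proof. by apply/subvP=> y /memv_imgP [x hx ->]; rewrite XhE; apply: XQ. Qed.
Lemma D_dec n : (D n.+1 <= D n)%VS.
Proof.
elim: n => [|n IH]; first by rewrite DS /D /= lim1g XQsub.
by rewrite DS [X in (_ <= X)%VS]DS limgS.
Qed.
Lemma D_sub n : (D n <= Q)%VS.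
Proof.
elim: n => [|n IH]; first by rewrite /D /= lim1g.
exact: subv_trans (D_dec n) IH.
Qed.
Lemma D_stable j : D j = D j.+1 -> forall m, D (m + j) = D j.
Proof.
move=> Hj; elim=> [|m IH]; first by rewrite add0n.
by rewrite addSnnS D_add -Hj -D_add IH.
Qed.

Definition N := \dim {:V}.

Lemma D_ex : exists j, (j <= N)%N /\ D j = D j.+1.
Proof.
suff H : forall n, (n <= N)%N -> (exists j, (j <= n)%N /\ D j = D j.+1) \/ (\dim (D n) + n <= N)%N.
  case: (H N (leqnn N)) => [[j [hj hD]]|h]; first by exists j.
  exists N; split=> //.
  have h0 : \dim (D N) = 0%N by apply/eqP; rewrite -leqn0 -(leq_add2r N) add0n.
  have : D N = 0%VS by apply/eqP; rewrite -dimv_eq0 h0.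
  move=> hN; rewrite hN; apply/eqP; rewrite eq_sym -subv0 -hN; exact: D_dec.
elim=> [|n IH] hn.
  by right; rewrite addn0; apply: dimvS; apply: subvf.
case: (IH (ltnW hn)) => [[j [hj hD]]|h]; first by left; exists j; split=> //; apply: leqW.
case: (eqVneq (D n) (D n.+1)) => [hD|hD]; first by left; exists n.
right.
have hlt : (\dim (D n.+1) < \dim (D n))%N.
  rewrite (ltn_leqif (dimv_leqif_eq (D_dec n))); apply/negP=> /eqP E.
  by rewrite E eqxx in hD.
by rewrite addnS; apply: leq_trans h; rewrite ltn_add2r.
Qed.

Definition T := Xp N.
Definition Q1 := D N.
Definition Q0 := (Q :&: lker T)%VS.

Lemma Q1_stable m : D (m + N) = Q1.
Proof.
have [j [hj hD]] := D_ex.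
rewrite /Q1 -(subnK hj) addnA !D_stable //.
Qed.
Lemma XQ1 : (Xh @: Q1)%VS = Q1.
Proof. by rewrite -DS -(Q1_stable 1). Qed.
Lemma TQ1 : (T @: Q1)%VS = Q1.
Proof. by rewrite /T -D_add Q1_stable. Qed.
Lemma Q1Q : (Q1 <= Q)%VS. Proof. exact: D_sub. Qed.
Lemma Q0Q : (Q0 <= Q)%VS. Proof. exact: capvSl. Qed.

Lemma Q01_cap : (Q0 :&: Q1 = 0)%VS.
Proof.
have h := limg_ker_dim T Q1; rewrite TQ1 -{2}(add0n (\dim Q1)) in h.
move/eqP: h; rewrite eqn_add2r dimv_eq0 => /eqP h.
apply/eqP; rewrite -subv0 -h; apply/subvP=> v /memv_capP [/memv_capP [_ h1] h2].
by apply/memv_capP.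
Qed.

Lemma Q01_sum : (Q0 + Q1)%VS = Q.
Proof.
apply/eqP; rewrite eqEdim subv_add Q0Q Q1Q /= dimv_disjoint_sum ?Q01_cap //.
by rewrite /Q0 /Q1 /D -/T limg_ker_dim.
Qed.

Definition e0 : 'End(V) := daddv_pi Q0 Q1.
Lemma e0Q0 s : e0 s \in Q0. Proof. exact: memv_pi. Qed.
Lemma e0Q s : e0 s \in Q. Proof. exact: (subvP Q0Q _ (e0Q0 s)). Qed.
Lemma e0_id {s} : s \in Q0 -> e0 s = s. Proof. exact: daddv_pi_id Q01_cap. Qed.
Lemma e0_e0 s : e0 (e0 s) = e0 s. Proof. by rewrite e0_id ?e0Q0. Qed.
Lemma e0_Q1 {s} : s \in Q1 -> e0 s = 0.
Proof.
move=> hs; have := daddv_pi_add (w := s) Q01_cap; rewrite Q01_sum (subvP Q1Q _ hs).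
rewrite (daddv_pi_id (U := Q1) (V := Q0)) //; last by rewrite capvC Q01_cap.
move=> /(_ isT) h.
by apply: (addIr s); rewrite add0r.
Qed.
Lemma e0_split {s} : s \in Q -> s - e0 s \in Q1.
Proof.
move=> hs; have := daddv_pi_add (w := s) Q01_cap; rewrite Q01_sum hs => /(_ isT) h.
by rewrite -{1}h addrC addKr memv_pi.
Qed.

Lemma iterXQ n s : s \in Q -> iter n X s \in Q.
Proof. elim: n => [|n IH] hs; first exact: hs. by rewrite iterS; apply: XQ; apply: IH. Qed.
Lemma X_e0 s : iter N X (e0 s) = 0.
Proof.
have := e0Q0 s; rewrite /Q0 => /memv_capP [_]; rewrite memv_ker /T XpE => /eqP //.
Qed.

Lemma R0_iterX {g} n {s} : R0 g -> s \in Q -> g (iter n X s) = iter n X (g s).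
Proof.
move=> Rg hs; elim: n => [|n IH] //=.
by rewrite (R0_Xcomm Rg) ?IH //; apply: Q_der; apply: iterXQ.
Qed.

Lemma R0_Q0 {g s} : R0 g -> s \in Q0 -> g s \in Q0.
Proof.
move=> Rg /memv_capP [hs]; rewrite !memv_ker /T !XpE => /eqP h.
apply/memv_capP; split; first exact: R0Q.
by rewrite memv_ker /T XpE -(R0_iterX N Rg hs) h (R0_0 Rg).
Qed.
Lemma R0_Q1 {g s} : R0 g -> s \in Q1 -> g s \in Q1.
Proof.
move=> Rg /memv_imgP [x hx ->]; rewrite /T XpE (R0_iterX N Rg hx) -XpE.
by apply: memv_img; apply: R0Q.
Qed.

Lemma R0_e0 {g s} : R0 g -> s \in Q -> g (e0 s) = e0 (g s).
Proof.
move=> Rg hs.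
have hs1 := e0_split hs.
have -> : g s = g (e0 s) + g (s - e0 s).
  by rewrite -(R0_add Rg); congr g; rewrite addrC subrK.
rewrite linearD /= (e0_Q1 (R0_Q1 Rg hs1)) addr0 (e0_id (s := g (e0 s))) //.
by apply: (R0_Q0 Rg); apply: e0Q0.
Qed.

Definition w1 := epsilon (inhabits 0) (fun w => w \in Q1 /\ X w = Y (c - e0 c)).
Lemma w1_spec : w1 \in Q1 /\ X w1 = Y (c - e0 c).
Proof.
apply: (epsilon_spec (inhabits 0) (fun w => w \in Q1 /\ X w = Y (c - e0 c))).
have h : Y (c - e0 c) \in Q1 by apply: R0_Q1; [apply: R0Y | apply: e0_split; apply: cQ].
move: h; rewrite -{1}XQ1 => /memv_imgP [w hw ->]; exists w; split=> //.
by rewrite XhE.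
Qed.

Definition fsel s := epsilon (inhabits id) (fun f => R0 f /\ f c = s).
Lemma fsel_spec {s} : s \in Q -> R0 (fsel s) /\ fsel s c = s.
Proof.
move/memQ=> [f [Rf ->]].
by apply: (epsilon_spec (inhabits id) (fun g => R0 g /\ g c = f c)); exists f.
Qed.
Definition star s t := fsel s t.

Lemma star_key {s t h} : s \in Q -> t \in Q -> R0 h -> h c = s -> star s t = h t.
Proof.
move=> hs ht Rh hc; have [Rf fc] := fsel_spec hs.
move/memQ: ht => [g [Rg ->]].
rewrite /star (R0_comm Rf Rg) ?fc -?hc; last exact: der_br.
by rewrite (R0_comm Rg Rh) //; apply: der_br.
Qed.
Lemma starQ {s t} : s \in Q -> t \in Q -> star s t \in Q.
Proof. by move=> hs ht; rewrite /star; apply: R0Q => //; case: (fsel_spec hs). Qed.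
Lemma star_comm {s t} : s \in Q -> t \in Q -> star s t = star t s.
Proof.
move=> hs ht; have [Rf fc] := fsel_spec hs; have [Rg gc] := fsel_spec ht.
by rewrite {1}(star_key hs ht Rf fc) -{1}gc (R0_comm Rf Rg) ?fc //; apply: der_br.
Qed.
Lemma star_assoc {s t u} : s \in Q -> t \in Q -> u \in Q ->
  star s (star t u) = star (star s t) u.
Proof.
move=> hs ht hu; have [Rf fc] := fsel_spec hs; have [Rg gc] := fsel_spec ht.
symmetry; apply: (star_key (h := fun v => fsel s (fsel t v))) => //.
- by apply: starQ.
- exact: R0comp.
- by rewrite gc.
Qed.
Lemma star_c {t} : t \in Q -> star c t = t.
Proof. by move=> ht; rewrite (star_key (h := id)) //; [apply: cQ | apply: R0id]. Qed.
Lemma star_addl {s s' t} : s \in Q -> s' \in Q -> t \in Q -> star (s + s') t = star s t + star s' t.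
Proof.
move=> hs hs' ht; have [Rf fc] := fsel_spec hs; have [Rg gc] := fsel_spec hs'.
rewrite (star_key (h := fun v => fsel s v + fsel s' v)) //.
- by apply: memvD.
- exact: R0add.
- by rewrite fc gc.
Qed.
Lemma star_addr {s} t t' : s \in Q -> star s (t + t') = star s t + star s t'.
Proof. by move=> hs; rewrite /star (R0_add (proj1 (fsel_spec hs))). Qed.
Lemma star_scalel x {s t} : s \in Q -> t \in Q -> star (x *: s) t = x *: star s t.
Proof.
move=> hs ht; have [Rf fc] := fsel_spec hs.
rewrite (star_key (h := fun v => x *: fsel s v)) //.
- by apply: memvZ.
- exact: R0scale.
- by rewrite fc.
Qed.
Lemma star_X {t} : t \in Q -> star (X c) t = X t.
Proof. by move=> ht; rewrite (star_key (h := X)) //; [apply: XQ; apply: cQ | apply: R0X]. Qed.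
Lemma star_Y {t} : t \in Q -> star (Y c) t = Y t.
Proof. by move=> ht; rewrite (star_key (h := Y)) //; [apply: YQ; apply: cQ | apply: R0Y]. Qed.
Lemma star_e0 {t} : t \in Q -> star (e0 c) t = e0 t.
Proof.
move=> ht; rewrite star_comm ?e0Q //; have [Rf fc] := fsel_spec ht.
by rewrite /star (R0_e0 Rf) ?fc //; apply: cQ.
Qed.

Definition SQ := {v : V | v \in Q}.
Lemma memvN' {v} : v \in Q -> - v \in Q. Proof. by rewrite memvN. Qed.
Definition zQ : SQ := exist _ 0 (mem0v Q).
Definition oQ : SQ := exist _ c cQ.
Definition addQ (x y : SQ) : SQ := exist _ (val x + val y) (rpredD (valP x) (valP y)).
Definition oppQ (x : SQ) : SQ := exist _ (- val x) (memvN' (valP x)).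
Definition subQ (x y : SQ) : SQ := addQ x (oppQ y).
Definition mulQ (x y : SQ) : SQ := exist _ (star (val x) (val y)) (starQ (valP x) (valP y)).

Lemma SQ_ext (x y : SQ) : val x = val y -> x = y.
Proof. exact: val_inj. Qed.

Lemma SQ_eqv (x y : SQ) : x = y -> val x = val y.
Proof. by move=> ->. Qed.

Lemma SQ_rt : @ring_theory SQ zQ oQ addQ mulQ subQ oppQ eq.
Proof.
split.
- by move=> x; apply: SQ_ext; rewrite /= add0r.
- by move=> x y; apply: SQ_ext; rewrite /= addrC.
- by move=> x y z; apply: SQ_ext; rewrite /= addrA.
- by move=> x; apply: SQ_ext; rewrite /= (star_c (valP x)).
- by move=> x y; apply: SQ_ext; rewrite /= (star_comm (valP x) (valP y)).
- by move=> x y z; apply: SQ_ext; rewrite /= (star_assoc (valP x) (valP y) (valP z)).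
- by move=> x y z; apply: SQ_ext; rewrite /= (star_addl (valP x) (valP y) (valP z)).
- by [].
- by move=> x; apply: SQ_ext; rewrite /= subrr.
Qed.

Add Ring SQring : SQ_rt.

Local Notation "x ⊕ y" := (addQ x y) (at level 50, left associativity).
Local Notation "x ⊖ y" := (subQ x y) (at level 50, left associativity).
Local Notation "x ⊗ y" := (mulQ x y) (at level 40, left associativity).

Definition scQ (t : k) : SQ := exist _ (t *: c) (memvZ t cQ).
Definition inQ v : SQ := exist _ (pq v) (pqQ v).
Definition alQ : SQ := exist _ (X c) (XQ cQ).
Definition beQ : SQ := exist _ (Y c) (YQ cQ).
Definition EQ : SQ := exist _ (e0 c) (e0Q c).
Definition WQ : SQ := exist _ w1 (subvP Q1Q _ (proj1 w1_spec)).

Lemma v_c : c = val oQ. Proof. by []. Qed.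
Lemma v_0 : (0 : V) = val zQ. Proof. by []. Qed.
Lemma v_D m m' : val m + val m' = val (m ⊕ m'). Proof. by []. Qed.
Lemma v_N m : - val m = val (oppQ m). Proof. by []. Qed.
Lemma v_B m m' : val m - val m' = val (m ⊖ m'). Proof. by []. Qed.
Lemma v_Z t m : t *: val m = val (scQ t ⊗ m).
Proof. by rewrite /= (star_scalel _ cQ (valP m)) (star_c (valP m)). Qed.
Lemma v_X m : X (val m) = val (alQ ⊗ m).
Proof. by rewrite /= (star_X (valP m)). Qed.
Lemma v_Y m : Y (val m) = val (beQ ⊗ m).
Proof. by rewrite /= (star_Y (valP m)). Qed.
Lemma v_E m : e0 (val m) = val (EQ ⊗ m).
Proof. by rewrite /= (star_e0 (valP m)). Qed.
Lemma v_pq v : pq v = val (inQ v). Proof. by []. Qed.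

Lemma scQ_add s t : scQ (s + t) = scQ s ⊕ scQ t.
Proof. by apply: SQ_ext; rewrite /= scalerDl. Qed.
Lemma scQ_mul s t : scQ (s * t) = scQ s ⊗ scQ t.
Proof.
apply: SQ_ext; rewrite /= (star_scalel _ cQ (memvZ t cQ)) (star_c (memvZ t cQ)).
by rewrite scalerA.
Qed.
Lemma scQ0 : scQ 0 = zQ.
Proof. by apply: SQ_ext; rewrite /= scale0r. Qed.

Lemma EE : EQ ⊗ EQ = EQ.
Proof. by apply: SQ_ext; rewrite /= (star_e0 (e0Q c)) e0_e0. Qed.
Lemma EW : EQ ⊗ WQ = zQ.
Proof. by apply: SQ_ext; rewrite /= (star_e0 (valP WQ)) /= (e0_Q1 (proj1 w1_spec)). Qed.
Lemma AW : alQ ⊗ WQ = beQ ⊖ beQ ⊗ EQ.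
Proof.
apply: SQ_ext; rewrite /= (star_X (valP WQ)) /= (proj2 w1_spec) (star_Y (e0Q c)).
by rewrite /Y brBr.
Qed.

Lemma v_iter n m : val (iter n (mulQ alQ) m) = iter n X (val m).
Proof.
elim: n => [|n IH]; first by [].
by rewrite !iterS -IH v_X.
Qed.
Lemma nilpE m : iter N (mulQ alQ) (EQ ⊗ m) = zQ.
Proof. by apply: SQ_ext; rewrite v_iter -v_E X_e0. Qed.

Definition sa u := scQ (la u).
Definition sb u := scQ (mu u).
Definition FQ := oQ ⊖ EQ.

Definition Mq u v : SQ :=
  sa u ⊗ sb v ⊗ FQ ⊖ sb u ⊗ sa v ⊗ EQ ⊕ sb u ⊗ sb v ⊗ WQ
  ⊕ sa u ⊗ alQ ⊗ FQ ⊗ inQ v ⊖ sa v ⊗ alQ ⊗ EQ ⊗ inQ u ⊕ sb u ⊗ beQ ⊗ inQ v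
  ⊕ alQ ⊗ beQ ⊗ EQ ⊗ inQ u ⊗ inQ v.

Definition mul u v := val (Mq u v).

Lemma sa_Q (m : SQ) : sa (val m) = zQ. Proof. by rewrite /sa (Q_la (valP m)) scQ0. Qed.
Lemma sb_Q (m : SQ) : sb (val m) = zQ. Proof. by rewrite /sb (Q_mu (valP m)) scQ0. Qed.
Lemma inQ_Q (m : SQ) : inQ (val m) = m. Proof. by apply: SQ_ext; rewrite /= (Q_pq (valP m)). Qed.

Lemma Mq_Qr x (m : SQ) : Mq x (val m) =
  sa x ⊗ alQ ⊗ FQ ⊗ m ⊕ sb x ⊗ beQ ⊗ m ⊕ alQ ⊗ beQ ⊗ EQ ⊗ inQ x ⊗ m.
Proof. rewrite /Mq sa_Q sb_Q inQ_Q; ring. Qed.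
Lemma Mq_Ql (m : SQ) z : Mq (val m) z =
  (alQ ⊗ beQ ⊗ EQ ⊗ inQ z ⊖ sa z ⊗ alQ ⊗ EQ) ⊗ m.
Proof. rewrite /Mq sa_Q sb_Q inQ_Q; ring. Qed.

Lemma cert (L R h1 h2 h3 : SQ) :
  L = R ⊕ h1 ⊗ (EQ ⊗ EQ ⊖ EQ) ⊕ h2 ⊗ (EQ ⊗ WQ) ⊕ h3 ⊗ (alQ ⊗ WQ ⊖ beQ ⊕ beQ ⊗ EQ) -> L = R.
Proof.
have g1 : EQ ⊗ EQ ⊖ EQ = zQ by rewrite EE; ring.
have g3 : alQ ⊗ WQ ⊖ beQ ⊕ beQ ⊗ EQ = zQ by rewrite AW; ring.
by rewrite g1 EW g3 => ->; ring.
Qed.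

Lemma mul_left x y z : mul x (mul y z) = mul y (mul x z).
Proof.
rewrite /mul !Mq_Qr; apply: (congr1 val); rewrite /Mq /FQ.
apply: (@cert _ _ (((sa x) ⊗ (sb y) ⊗ (sa z) ⊗ (alQ)) ⊕ ((sa x) ⊗ (inQ y) ⊗ (sa z) ⊗ (alQ) ⊗ (alQ)) ⊖ ((inQ x) ⊗ (sa y) ⊗ (sb z) ⊗ (alQ) ⊗ (beQ)) ⊖ ((inQ x) ⊗ (sb y) ⊗ (sa z) ⊗ (alQ) ⊗ (beQ)) ⊖ ((sb x) ⊗ (sa y) ⊗ (sa z) ⊗ (alQ)) ⊖ ((inQ x) ⊗ (sa y) ⊗ (sa z) ⊗ (alQ) ⊗ (alQ)) ⊕ ((sa x) ⊗ (inQ y) ⊗ (sb z) ⊗ (alQ) ⊗ (beQ)) ⊕ ((sb x) ⊗ (inQ y) ⊗ (sa z) ⊗ (alQ) ⊗ (beQ))) ((zQ ⊖ ((sa x) ⊗ (sb y) ⊗ (sb z) ⊗ (alQ))) ⊕ ((inQ x) ⊗ (sb y) ⊗ (sb z) ⊗ (alQ) ⊗ (beQ)) ⊕ ((sb x) ⊗ (sa y) ⊗ (sb z) ⊗ (alQ)) ⊖ ((sb x) ⊗ (inQ y) ⊗ (sb z) ⊗ (alQ) ⊗ (beQ))) (((sa x) ⊗ (sb y) ⊗ (sb z)) ⊖ ((sb x) ⊗ (sa y) ⊗ (sb z)))); ring.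
Qed.
Lemma mul_right x y z : mul (mul x y) z = mul (mul x z) y.
Proof.
rewrite /mul !Mq_Ql; apply: (congr1 val); rewrite /Mq /FQ.
apply: (@cert _ _ ((zQ ⊖ ((sa x) ⊗ (sb y) ⊗ (inQ z) ⊗ (alQ) ⊗ (beQ))) ⊖ ((sb x) ⊗ (sa y) ⊗ (inQ z) ⊗ (alQ) ⊗ (beQ)) ⊕ ((sa x) ⊗ (sb y) ⊗ (sa z) ⊗ (alQ)) ⊕ ((sa x) ⊗ (inQ y) ⊗ (sa z) ⊗ (alQ) ⊗ (alQ)) ⊕ ((sa x) ⊗ (inQ y) ⊗ (sb z) ⊗ (alQ) ⊗ (beQ)) ⊕ ((sb x) ⊗ (inQ y) ⊗ (sa z) ⊗ (alQ) ⊗ (beQ)) ⊖ ((sa x) ⊗ (sa y) ⊗ (sb z) ⊗ (alQ)) ⊖ ((sa x) ⊗ (sa y) ⊗ (inQ z) ⊗ (alQ) ⊗ (alQ))) (((sb x) ⊗ (sb y) ⊗ (inQ z) ⊗ (alQ) ⊗ (beQ)) ⊖ ((sb x) ⊗ (sb y) ⊗ (sa z) ⊗ (alQ)) ⊖ ((sb x) ⊗ (inQ y) ⊗ (sb z) ⊗ (alQ) ⊗ (beQ)) ⊕ ((sb x) ⊗ (sa y) ⊗ (sb z) ⊗ (alQ))) zQ); ring.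
Qed.

Definition Bq u v : SQ :=
  sa u ⊗ sb v ⊖ sb u ⊗ sa v ⊕ sa u ⊗ alQ ⊗ inQ v ⊖ sa v ⊗ alQ ⊗ inQ u
  ⊕ sb u ⊗ beQ ⊗ inQ v ⊖ sb v ⊗ beQ ⊗ inQ u.

Lemma br_Bq u v : br u v = val (Bq u v).
Proof.
rewrite {1}(decomp_eq u) {1}(decomp_eq v).
rewrite !brDl !brDr !brZl !brZr !Halt (brQQ (pqQ u) (pqQ v)) (br_anti b a) (br_anti (pq u) a) (br_anti (pq u) b).
rewrite -/c -/(X (pq v)) -/(Y (pq v)) -/(X (pq u)) -/(Y (pq u)).
rewrite !scaler0 ?add0r ?addr0 !v_pq !v_X !v_Y v_c.
rewrite !scalerN !v_Z !v_N !v_D.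
apply: SQ_eqv; rewrite /Bq /sa /sb; ring.
Qed.

Lemma mul_lie u v : mul u v - mul v u = br u v.
Proof.
rewrite br_Bq /mul v_B; apply: SQ_eqv; rewrite /Mq /Bq /FQ; ring.
Qed.

Lemma sa_lin t x y : sa (t *: x + y) = scQ t ⊗ sa x ⊕ sa y.
Proof. by rewrite /sa la_lin scQ_add scQ_mul. Qed.
Lemma sb_lin t x y : sb (t *: x + y) = scQ t ⊗ sb x ⊕ sb y.
Proof. by rewrite /sb mu_lin scQ_add scQ_mul. Qed.
Lemma inQ_lin t x y : inQ (t *: x + y) = scQ t ⊗ inQ x ⊕ inQ y.
Proof. by apply: SQ_ext; rewrite /= pq_lin (star_scalel _ cQ (pqQ x)) (star_c (pqQ x)). Qed.

Lemma mul_bil : bilinear_op mul.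
Proof.
split=> t x y z; rewrite /mul v_Z v_D; apply: SQ_eqv;
  rewrite /Mq !sa_lin !sb_lin !inQ_lin; ring.
Qed.

Definition powQ u n := iter n (mulQ u) oQ.
Lemma iterA u n w : iter n (mulQ u) w = powQ u n ⊗ w.
Proof. elim: n => [|n IH] /=; first by ring. by rewrite IH; ring. Qed.
Lemma powM u v n : powQ (u ⊗ v) n = powQ u n ⊗ powQ v n.
Proof. elim: n => [|n IH] /=; first by ring. by rewrite /powQ /= -!/(powQ _ _) IH; ring. Qed.
Lemma powE n : powQ EQ n.+1 = EQ.
Proof.
elim: n => [|n IH]; first by rewrite /powQ /=; ring.
by rewrite /powQ iterS -/(powQ _ _) IH EE.
Qed.

Lemma mul_complete : LR_complete mul.
Proof.
move=> x; exists N.+2 => y.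
set G := alQ ⊗ beQ ⊗ EQ ⊗ inQ x ⊖ sa x ⊗ alQ ⊗ EQ.
have HR : forall n (m : SQ), iter n (fun z => mul z x) (val m) = val (iter n (mulQ G) m).
  elim=> [|n IH] m //.
  by rewrite !iterS IH /mul Mq_Ql.
rewrite iterSr -/(mul y x) /mul HR iterA.
have -> : G = alQ ⊗ EQ ⊗ (beQ ⊗ inQ x ⊖ sa x) by rewrite /G; ring.
rewrite !powM powE.
have -> : powQ alQ N.+1 = alQ ⊗ powQ alQ N by [].
have -> : alQ ⊗ powQ alQ N ⊗ EQ ⊗ powQ (beQ ⊗ inQ x ⊖ sa x) N.+1 ⊗ Mq y x
  = alQ ⊗ (powQ alQ N ⊗ (EQ ⊗ (powQ (beQ ⊗ inQ x ⊖ sa x) N.+1 ⊗ Mq y x))) by ring.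
rewrite -(iterA alQ N) nilpE.
have -> : alQ ⊗ zQ = zQ by ring.
by [].
Qed.

End Main.

Theorem theorem4p3 (k : fieldType) (V : vectType k) (br : V -> V -> V) :
  [pchar k] =i pred0 ->
  is_lie_bracket br ->
  two_step_solvable br ->
  (exists a b : V, lie_generated_by br a b) ->
  exists mul : V -> V -> V, is_LR_structure br mul /\ LR_complete mul.
Proof.
move=> _ Hlie H2 [a [b Hgen]].
exists (@mul k V br Hlie H2 a b); split; last exact: (@mul_complete k V br Hlie H2 a b Hgen).
split.
- exact: (@mul_bil k V br Hlie H2 a b).
- exact: (@mul_left k V br Hlie H2 a b Hgen).
- exact: (@mul_right k V br Hlie H2 a b Hgen).
- exact: (@mul_lie k V br Hlie H2 a b Hgen).
Qed.
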